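(* Let $r\ge1$, $n\ge1$ and $k\ge1$ be integers, and let $\mathcal P(n,r,1)$ be the set of lattice paths with steps $U=(1,1)$ and $D=(1,-r)$ from $(0,0)$ to $((r+1)n+1,1)$ (so with $rn+1$ up steps and $n$ down steps). Then (whenever the denominators are nonzero): (1) The number of paths in $\mathcal P(n,r,1)$ with $k-1$ peaks that start with a down step and end with an up step and have exactly $j$ peaks on or below the $x$-axis is $\frac1k\binom{rn}{k-1}\binom{n-1}{k-1}$, for each $j=0,1,\dots,k-1$. (2) The number of paths in $\mathcal P(n,r,1)$ with $k-1$ valleys that start with an up step and end with a down step and have exactly $j$ valleys on or below the $x$-axis is $\frac1k\binom{rn}{k-1}\binom{n-1}{k-1}$, for each $j=0,1,\dots,k-1$. (3) The number of paths in $\mathcal P(n,r,1)$ with $rn-k$ double rises that start with an up step and end with an up step and have exactly $j$ double rises on or below the $x$-axis is $\frac{1}{rn-k+1}\binom{rn}{k}\binom{n-1}{k-1}$, for each $j=0,1,\dots,rn-k$. (4) The number of paths in $\mathcal P(n,r,1)$ with $n-k-1$ double falls that start with a down step and end with a down step and have exactly $j$ double falls on or below the $x$-axis is $\frac{1}{n-k}\binom{rn}{k-1}\binom{n-1}{k}$, for each $j=0,1,\dots,n-k-1$. (5) The number of paths in $\mathcal P(n,r,1)$ with $k$ peaks that start with an up step and have exactly $j$ up steps starting on or below the $x$-axis is $\frac{1}{rn+1}\binom{rn+1}{k}\binom{n-1}{k-1}$, for each $j=1,2,\dots,rn+1$. (6) The number of paths in $\mathcal P(n,r,1)$ with $k$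 valleys that start with a down step and have exactly $j$ down steps starting on or below the $x$-axis is $\frac1n\binom{rn}{k-1}\binom{n}{k}$, for each $j=1,2,\dots,n$.
   Context: Writing a path as a word in $U,D$: a peak is an occurrence of two consecutive steps $UD$, a valley an occurrence of $DU$, a double rise an occurrence of $UU$, a double fall an occurrence of $DD$; such an occurrence lies on or below the $x$-axis if the vertex between its two steps has $y$-coordinate $\le0$. A step starts on or below the $x$-axis if its initial vertex has $y$-coordinate $\le0$. *)

(* Defs.v *)
From mathcomp Require Import all_boot all_order all_algebra.
Set Implicit Arguments. Unset Strict Implicit. Unset Printing Implicit Defensive.
Import Order.TTheory GRing.Theory Num.Theory.

(* A path is a word over {U,D}, encoded as seq bool: true = U = (1,1),
   false = D = (1,-r). *)

Definition ht (r : nat) (s : seq bool) (i : nat) : int :=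
  (count id (take i s))%:Z - (r * count negb (take i s))%:Z.

Definition in_P (r n : nat) (s : seq bool) : bool :=
  [&& size s == (r.+1 * n).+1, count id s == (r * n).+1 & count negb s == n].

Definition occ (a b : bool) (s : seq bool) : nat :=
  count (fun i => (nth false s i == a) && (nth false s i.+1 == b))
        (iota 0 (size s).-1).

Definition occ_low (r : nat) (a b : bool) (s : seq bool) : nat :=
  count (fun i => [&& nth false s i == a, nth false s i.+1 == b
                    & (ht r s i.+1 <= 0)%R])
        (iota 0 (size s).-1).

Definition steps_low (r : nat) (a : bool) (s : seq bool) : nat :=
  count (fun i => (nth false s i == a) && (ht r s i <= 0)%R) (iota 0 (size s)).

Definition first_step (s : seq bool) : bool := nth false s 0.
Definition last_step (s : seq bool) : bool := nth false s (size s).-1.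

Definition peaks := occ true false.
Definition valleys := occ false true.
Definition drises := occ true true.
Definition dfalls := occ false false.

Definition npaths (r n : nat) (Q : seq bool -> bool) : nat :=
  #|[set p : ((r.+1 * n).+1).-tuple bool | in_P r n p && Q p]|.

(* Main.v *)
Require Import Defs.
From mathcomp Require Import all_boot all_order all_algebra.
From mathcomp Require Import zify ring lra.
Set Implicit Arguments. Unset Strict Implicit. Unset Printing Implicit Defensive.
Import Order.TTheory GRing.Theory Num.Theory.

Definition cn (s : seq bool) (i : nat) : bool := nth false s (i %% size s).

Lemma cn_per s i : cn s (i + size s) = cn s i.
Proof. by rewrite /cn modnDr. Qed.

Lemma cn_small s i : i < size s -> cn s i = nth false s i.
Proof. by move=> h; rewrite /cn modn_small. Qed.

Lemma cn_rot s q i : q <= size s -> cn (rot q s) i = cn s (q + i).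
Proof.
move=> hq; case: (ltnP 0 (size s)) => sp; last first.
  have e : s = [::] by apply/nilP; rewrite /nilp -leqn0.
  rewrite e /cn /=. by case: q hq => [|q] //= _; rewrite !nth_nil.
rewrite /cn size_rot /rot.
have hi : i %% size s < size s by rewrite ltn_mod.
rewrite nth_cat size_drop.
case: ltnP => h.
  rewrite nth_drop; congr nth.
  rewrite -modnDmr [RHS]modn_small //; lia.
rewrite nth_take; last first.
  lia.
congr nth.
rewrite -modnDmr.
have -> : q + i %% size s = (q + i %% size s - size s) + size s by lia.
rewrite modnDr [RHS]modn_small; lia.
Qed.

Local Open Scope ring_scope.

Definition wt (r : nat) (b : bool) : int := if b then 1 else - (r%:Z).
Definition Hc (r : nat) (s : seq bool) (m : nat) : int := \sum_(i < m) wt r (cn s i).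

Lemma ht_Hc r s i : (i <= size s)%N -> ht r s i = Hc r s i.
Proof.
elim: i => [|i IH] hi.
  by rewrite /ht /Hc big_ord0 take0 /= muln0 subrr.
rewrite /Hc big_ord_recr /= -/(Hc r s i) -IH; last by apply: ltnW.
rewrite /ht (take_nth false hi) -cats1 !count_cat /= cn_small //.
case: (nth false s i) => /=; rewrite ?addn0 ?addn1 ?muln0 ?mulnS ?addn0.
  rewrite intS; ring.
rewrite PoszD; ring.
Qed.

Lemma Hc_add r s a b : Hc r s (a + b) = Hc r s a + \sum_(i < b) wt r (cn s (a + i)).
Proof. by rewrite /Hc big_split_ord. Qed.

Lemma Hc_rot r s q v : (q <= size s)%N -> Hc r (rot q s) v = Hc r s (q + v) - Hc r s q.
Proof.
move=> hq; rewrite Hc_add addrAC subrr add0r /Hc.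
by apply: eq_bigr => i _; rewrite cn_rot.
Qed.

Lemma Hc_per r s m : Hc r s (size s + m) = Hc r s (size s) + Hc r s m.
Proof.
rewrite Hc_add; congr (_ + _); apply: eq_bigr => i _.
by rewrite addnC cn_per.
Qed.

Lemma Hc_P r n s : in_P r n s -> Hc r s (size s) = 1.
Proof.
case/and3P => /eqP hs /eqP hU /eqP hD.
rewrite -ht_Hc // /ht take_size hU hD.
by rewrite -addn1 PoszD addrAC subrr add0r.
Qed.

Definition Ev (e : bool -> bool -> bool) (s : seq bool) (m : nat) : bool :=
  e (cn s (m + size s).-1) (cn s m).

Lemma Ev_per e s m : Ev e s (size s + m) = Ev e s m.
Proof.
rewrite /Ev [(size s + m)%N]addnC cn_per; congr e.
case: (posnP (size s)) => [->|sp]; first by rewrite !addn0.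
have -> : ((m + size s + size s).-1 = (m + size s).-1 + size s)%N by lia.
by rewrite cn_per.
Qed.

Lemma Ev_rot e s q m : (q <= size s)%N -> Ev e (rot q s) m = Ev e s (q + m).
Proof.
move=> hq; rewrite /Ev size_rot !cn_rot //; congr (e (cn s _) _).
case: (posnP (size s)) => [s0|sp]; first by move: hq; rewrite s0 leqn0 => /eqP->.
lia.
Qed.

Lemma count_shift (f : pred nat) L q : (forall m, f (L + m)%N = f m) ->
  count f (iota q L) = count f (iota 0 L).
Proof.
move=> hf; elim: q => // q IH; rewrite -IH.
case: L hf {IH} => // L hf.
have -> : iota q.+1 L.+1 = iota q.+1 L ++ [:: (L.+1 + q)%N].
  by have := iotaD q.+1 L 1; rewrite addn1 => -> /=; congr (_ ++ [:: _]); lia.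
rewrite /= count_cat /= addn0.
by rewrite hf addnC.
Qed.

Definition cyc e s := count (Ev e s) (iota 0 (size s)).

Lemma cyc_rot e s q : (q <= size s)%N -> cyc e (rot q s) = cyc e s.
Proof.
move=> hq; rewrite /cyc size_rot.
rewrite (eq_count (a2 := fun m => Ev e s (q + m))); last by move=> m; rewrite Ev_rot.
rewrite -(count_map (addn q) (Ev e s)) -iotaDl addn0.
by apply: count_shift => m; rewrite Ev_per.
Qed.

Definition Kp r s m : int := Hc r s m * (size s)%:Z - m%:Z.

Lemma Kp_per r s m : Hc r s (size s) = 1 -> Kp r s (size s + m) = Kp r s m.
Proof. by move=> h1; rewrite /Kp Hc_per h1 PoszD; ring. Qed.

Definition Rk r e s q := count (fun p => Ev e s p && (Kp r s p < Kp r s q)) (iota 0 (size s)).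

Lemma low_Kp r s q v : (0 < v < size s)%N ->
  (Hc r s (q + v) - Hc r s q <= 0) = (Kp r s (q + v) < Kp r s q).
Proof.
move=> /andP [v0 vL]; rewrite /Kp.
move: (Hc r s (q + v)) (Hc r s q) => x y.
apply/idP/idP => h; nia.
Qed.

Lemma stat_rot r e s q : Hc r s (size s) = 1 -> (q < size s)%N ->
  count (fun v => Ev e (rot q s) v && (Hc r (rot q s) v <= 0)) (iota 1 (size s).-1)
  = Rk r e s q.
Proof.
move=> h1 hq.
set g := fun m => Ev e s m && (Kp r s m < Kp r s q).
rewrite (eq_in_count (a2 := fun v => g (q + v)%N)); last first.
  move=> v; rewrite mem_iota => /andP [v1 v2].
  rewrite /g Ev_rot ?Hc_rot ?low_Kp //; try lia.
rewrite -(count_map (addn q) g) -iotaDl.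
have -> : count g (iota (q + 1) (size s).-1) = count g (iota q (size s)).
  have -> : size s = (size s).-1.+1 by lia.
  by rewrite /= {2}/g ltxx andbF add0n addn1.
by rewrite /Rk count_shift // => m; rewrite /g Ev_per Kp_per.
Qed.

Lemma count_add1 (a : pred nat) p s : a p = false -> p \in s -> uniq s ->
  count (predU a (pred1 p)) s = (count a s + 1)%N.
Proof.
move=> ap ps us.
have := count_predUI a (pred1 p) s.
rewrite (eq_count (a1 := predI a (pred1 p)) (a2 := pred0)); last first.
  by move=> x /=; case: eqP => [->|]; rewrite ?ap ?andbF.
rewrite count_pred0 addn0 => ->; congr addn.
by rewrite count_uniq_mem // ps.
Qed.

Lemma Kp_inj r s p q : (p < size s)%N -> (q < size s)%N -> Kp r s p = Kp r s q -> p = q.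
Proof.
rewrite /Kp => hp hq; move: (Hc r s p) (Hc r s q) => x y h.
move: (size s) hp hq h => L hp hq h.
case: (ltrgtP x y) => hxy.
- have : (x + 1) * L%:Z <= y * L%:Z by apply: ler_wpM2r => //; lia.
  lia.
- have : (y + 1) * L%:Z <= x * L%:Z by apply: ler_wpM2r => //; lia.
  lia.
- move: h; rewrite hxy; lia.
Qed.

Lemma Rk_lt_Kp r e s p q : Ev e s p -> (p < size s)%N -> Kp r s p < Kp r s q ->
  (Rk r e s p < Rk r e s q)%N.
Proof.
move=> ep hp hpq; rewrite /Rk -addn1 -(count_add1 (p := p)) ?mem_iota ?iota_uniq ?ltxx ?andbF //.
apply: sub_count => x /= /orP [/andP [ex hx]|/eqP ->]; rewrite ?ep ?hpq //.
by rewrite ex (lt_trans hx hpq).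
Qed.

Lemma Rk_lt_cyc r e s q : Ev e s q -> (q < size s)%N -> (Rk r e s q < cyc e s)%N.
Proof.
move=> eq hq; rewrite /Rk /cyc -addn1 -(count_add1 (p := q)) ?mem_iota ?iota_uniq ?ltxx ?andbF //.
by apply: sub_count => x /= /orP [/andP [ex hx]|/eqP ->].
Qed.

Lemma exactly_one r e s c j : (c <= j < cyc e s + c)%N ->
  count (fun q => Ev e s q && (Rk r e s q + c == j)%N) (iota 0 (size s)) = 1%N.
Proof.
move=> /andP [cj jK].
set ev := filter (Ev e s) (iota 0 (size s)).
have evP x : x \in ev -> Ev e s x /\ (x < size s)%N.
  by rewrite mem_filter mem_iota => /andP [-> /andP [_ ->]].
have -> : count (fun q => Ev e s q && (Rk r e s q + c == j)%N) (iota 0 (size s))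
   = count (fun y => y + c == j)%N (map (Rk r e s) ev).
  rewrite count_map count_filter; apply: eq_count => x /=; by rewrite andbC.
have Sev : size ev = cyc e s by rewrite size_filter.
have U : uniq (map (Rk r e s) ev).
  rewrite map_inj_in_uniq ?filter_uniq ?iota_uniq // => x y /evP [ex hx] /evP [ey hy] hxy.
  case: (ltgtP (Kp r s x) (Kp r s y)) => h.
  - by have := Rk_lt_Kp ex hx h; rewrite hxy ltnn.
  - by have := Rk_lt_Kp ey hy h; rewrite hxy ltnn.
  - exact: Kp_inj h.
have sub : {subset map (Rk r e s) ev <= iota 0 (cyc e s)}.
  move=> y /mapP [x /evP [ex hx] ->]; rewrite mem_iota add0n.
  exact: Rk_lt_cyc.
have [_ E] := uniq_min_size U sub (ltac:(by rewrite size_map size_iota Sev)).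
have P : perm_eq (map (Rk r e s) ev) (iota 0 (cyc e s)).
  by apply: uniq_perm => //; apply: iota_uniq.
rewrite (permP P).
rewrite (eq_count (a2 := pred1 (j - c)%N)); last by move=> y /=; apply/eqP/eqP; lia.
by rewrite count_uniq_mem ?iota_uniq // mem_iota leq0n add0n /=; lia.
Qed.

Lemma sum_count (T : Type) (b : pred T) (s : seq T) : (\sum_(i <- s) (b i : nat))%N = count b s.
Proof. by elim: s => [|x s IH]; rewrite ?big_nil ?big_cons ?IH. Qed.

Lemma sum_ord_count n (b : pred nat) : (\sum_(i < n) (b i : nat))%N = count b (iota 0 n).
Proof. by rewrite -(big_mkord xpredT (fun i => (b i : nat))) /index_iota subn0 sum_count. Qed.

Lemma card_sumP (T : finType) (P : pred T) : #|[set x : T | P x]| = (\sum_(x : T) (P x : nat))%N.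
Proof.
rewrite -sum1_card big_mkcond /=; apply: eq_bigr => x _; rewrite inE; by case: (P x).
Qed.

Definition hswap L (p : (L.+1).-tuple bool * 'I_L.+1) : (L.+1).-tuple bool * 'I_L.+1 :=
  ([tuple of rot p.2 p.1], inord ((L.+1 - p.2) %% L.+1)).

Lemma rot_back (s : seq bool) q : (q < size s)%N ->
  rot ((size s - q) %% size s) (rot q s) = s.
Proof.
move=> hq; case: (posnP q) => [->|qp]; first by rewrite subn0 modnn !rot0.
rewrite modn_small; last by lia.
by have := rotK q s; rewrite /rotr size_rot.
Qed.

Lemma hswapK L : involutive (@hswap L).
Proof.
case=> s q; rewrite /hswap /=; congr pair.
  apply: val_inj => /=; rewrite inordK ?ltn_mod //.
  by have := rot_back (s := s) (q := q); rewrite size_tuple; apply.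
apply: val_inj => /=; rewrite inordK ?ltn_mod //.
have hq := ltn_ord q.
case: (posnP (nat_of_ord q)) => [q0|qp]; first by rewrite q0 subn0 modnn inordK // subn0 modnn.
rewrite (modn_small (m := (L.+1 - q)%N)); last by lia.
rewrite inordK; last by lia.
rewrite modn_small; lia.
Qed.

Lemma Ev_back e s q : (q < size s)%N -> Ev e s (q + (size s - q) %% size s) = Ev e s 0.
Proof.
move=> hq; case: (posnP q) => [->|qp]; first by rewrite subn0 modnn.
rewrite modn_small; last by lia.
have -> : (q + (size s - q) = size s + 0)%N by lia.
by rewrite Ev_per.
Qed.

Lemma rot_back' (s : seq bool) q L : size s = L.+1 -> (q < L.+1)%N ->
  rot ((L.+1 - q) %% L.+1) (rot q s) = s.
Proof. by move=> <-; apply: rot_back. Qed.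

Lemma Ev_back' e s q L : size s = L.+1 -> (q < L.+1)%N ->
  Ev e s (q + (L.+1 - q) %% L.+1) = Ev e s 0.
Proof. by move=> <-; apply: Ev_back. Qed.

Lemma double_count r L e (good G : seq bool -> bool) (st : seq bool -> nat) c K j :
 (forall s : seq bool, size s = L.+1 -> good s -> Hc r s L.+1 = 1) ->
 (forall s q, size s = L.+1 -> (q <= L)%N -> good (rot q s) = good s) ->
 (forall s q, size s = L.+1 -> (q <= L)%N -> G (rot q s) = G s) ->
 (forall s, size s = L.+1 -> good s -> G s -> cyc e s = K) ->
 (forall s q, size s = L.+1 -> good s -> (q <= L)%N -> Ev e s q ->
     st (rot q s) = (Rk r e s q + c)%N) ->
 (c <= j < K + c)%N ->
 (K * #|[set s : (L.+1).-tuple bool | [&& good s, Ev e s 0, G s & st s == j]]| =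
   #|[set s : (L.+1).-tuple bool | [&& good s, Ev e s 0 & G s]]|)%N.
Proof.
move=> hH hgood hG hK hst hj.
pose F (s : (L.+1).-tuple bool) (q : 'I_L.+1) :=
  ([&& good s, Ev e s 0, G s, Ev e s q & st (rot q s) == j] : nat).
have A : (\sum_s \sum_q F s q)%N = #|[set s : (L.+1).-tuple bool | [&& good s, Ev e s 0 & G s]]|.
  rewrite card_sumP; apply: eq_bigr => s _.
  have sz := size_tuple s.
  case hB: [&& good s, Ev e s 0 & G s]; last first.
    by apply: big1 => q _; rewrite /F; move: hB; case: (good s); case: (Ev e s 0); case: (G s).
  move/and3P: hB => [g0 e0 G0].
  rewrite (eq_bigr (fun q : 'I_L.+1 => (Ev e s q && (Rk r e s q + c == j)%N : nat))); last first.
    move=> q _; rewrite /F g0 e0 G0 /=.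
    case eq: (Ev e s q) => //=.
    have hq' : (q <= L)%N by rewrite -ltnS.
    by rewrite hst.
  rewrite (sum_ord_count _ (fun q => Ev e s q && (Rk r e s q + c == j)%N)).
  have E1 := @exactly_one r e s c j; rewrite sz in E1.
  by rewrite E1 // hK.
have B : (\sum_s \sum_q F s q)%N = (K * #|[set s : (L.+1).-tuple bool | [&& good s, Ev e s 0, G s & st s == j]]|)%N.
  rewrite pair_big /= (reindex_inj (inv_inj (@hswapK L))) /= -(pair_big xpredT xpredT (fun s q => F (hswap (s, q)).1 (hswap (s, q)).2)) /=.
  rewrite card_sumP big_distrr /=; apply: eq_bigr => s _.
  have sz := size_tuple s.
  rewrite (eq_bigr (fun q : 'I_L.+1 => ([&& good s, Ev e s 0, G s & st s == j] && Ev e s q : nat))); last first.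
    move=> q _; rewrite /F /hswap /= inordK ?ltn_mod //.
    have hq := ltn_ord q.
    have hq' : (q <= L)%N by rewrite -ltnS.
    have hq'' : (q <= size s)%N by rewrite sz ltnW.
    rewrite (rot_back' sz hq) (hgood _ _ sz hq') (hG _ _ sz hq') !Ev_rot //.
    rewrite Ev_back' // addn0.
    by case: (good s) (Ev e s 0) (G s) (Ev e s q) (st s == j) => [] [] [] [] [].
  case hS: [&& good s, Ev e s 0, G s & st s == j]; last first.
    by rewrite muln0; apply: big1.
  move/and4P: hS => [g0 e0 G0 _].
  rewrite muln1 (sum_ord_count _ (Ev e s)).
  by rewrite -(hK s) // /cyc sz.
by rewrite -B A.
Qed.

Local Close Scope ring_scope.

Fixpoint W (m : nat) : seq (seq bool) :=
  if m is m'.+1 then [seq true :: w | w <- W m'] ++ [seq false :: w | w <- W m'] else [:: [::]].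

Lemma cons_inj (x : bool) : injective (cons x).
Proof. by move=> a b [->]. Qed.

Lemma W_mem m s : (s \in W m) = (size s == m).
Proof.
elim: m s => [|m IH] s; first by case: s.
case: s => [|x s] /=; rewrite mem_cat.
  by apply/negbTE/negP => /orP [] /mapP [w _].
have nm y : (x :: s \in [seq y :: w | w <- W m]) = (x == y) && (s \in W m).
  case: (eqVneq x y) => [->|ne]; first by rewrite (mem_map (@cons_inj y)).
  by apply/negbTE/negP => /mapP [w _ [h _]]; rewrite h eqxx in ne.
rewrite !nm IH eqSS; by case: (x); rewrite /= ?orbF.
Qed.

Lemma W_uniq m : uniq (W m).
Proof.
elim: m => [|m IH] //=; rewrite cat_uniq !map_inj_uniq ?IH //; try exact: cons_inj.
rewrite andbT; apply/hasPn => s /mapP [w _ ->]; apply/negP => /mapP [v _ []] //.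
Qed.

Lemma W_perm m : perm_eq (W m) (map val (enum {:m.-tuple bool})).
Proof.
apply: uniq_perm; first exact: W_uniq.
  by rewrite map_inj_uniq ?enum_uniq //; apply: val_inj.
move=> s; rewrite W_mem; apply/idP/idP.
  move=> h; apply/mapP; exists (Tuple h) => //; by rewrite mem_enum.
by case/mapP => t _ ->; rewrite size_tuple.
Qed.

Lemma card_W m (P : pred (seq bool)) : #|[set t : m.-tuple bool | P t]| = count P (W m).
Proof.
rewrite card_sumP -sum_count (perm_big _ (W_perm m)) big_map big_enum /=.
by apply: eq_bigl => t; rewrite inE.
Qed.

Lemma iota1 n : iota 1 n = map S (iota 0 n).
Proof. by rewrite -(iotaDl 1 0 n). Qed.

Lemma occ_cons a b x y s :
  occ a b [:: x, y & s] = (((x == a) && (y == b)) + occ a b (y :: s))%N.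
Proof. by rewrite /occ /= iota1 count_map. Qed.

Lemma occ1 a b x : occ a b [:: x] = 0%N.
Proof. by []. Qed.

Lemma occ_id1 x w : (occ true false (x :: w) + last x w = occ false true (x :: w) + x)%N.
Proof.
elim: w x => [|y w IH] x /=; first by rewrite occ1.
rewrite !occ_cons; move: (IH y); case: x; case: y => /=; lia.
Qed.

Lemma occ_id2 x w : (occ true true (x :: w) + occ true false (x :: w) + last x w
   = count id (x :: w))%N.
Proof.
elim: w x => [|y w IH] x /=; first by rewrite !occ1; case: x.
rewrite !occ_cons; move: (IH y) => /=; case: x; case: y => /=; lia.
Qed.

Lemma occ_id3 x w : (occ false false (x :: w) + occ false true (x :: w) + ~~ last x w
   = count negb (x :: w))%N.
Proof.
elim: w x => [|y w IH] x /=; first by rewrite !occ1; case: x.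
rewrite !occ_cons; move: (IH y) => /=; case: x; case: y => /=; lia.
Qed.

Definition cmp (a p : nat) : nat :=
  match p with 0 => (a == 0 : nat) | p'.+1 => match a with 0 => 0 | a'.+1 => 'C(a', p') end end.

Lemma cmpS a p : cmp a.+1 p.+1 = (cmp a p.+1 + cmp a p)%N.
Proof.
case: a => [|a]; case: p => [|p] //=; rewrite ?bin0n ?bin0 ?binS //.
Qed.

Definition wform (x y : bool) (a b p : nat) : nat :=
  match x, y with
  | true, false => cmp a p * cmp b p
  | true, true => cmp a p.+1 * cmp b p
  | false, true => cmp a p.+1 * cmp b p.+1
  | false, false => cmp a p * cmp b p.+1
  end.

Definition Nw m x y a p := count (fun w => [&& count id (x :: w) == a, last x w == y
   & occ true false (x :: w) == p]) (W m).

Lemma Nw_big m x y a p : (m.+1 < a)%N -> Nw m x y a p = 0%N.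
Proof.
move=> h; rewrite /Nw; apply/eqP; rewrite -leqn0 leqNgt -has_count; apply/hasPn => w.
rewrite W_mem => /eqP sw; apply/negP => /and3P [/eqP c _ _].
have := count_size id (x :: w); rewrite c /= sw; lia.
Qed.

Lemma NwS_F m y a p : Nw m.+1 false y a p = (Nw m true y a p + Nw m false y a p)%N.
Proof.
rewrite /Nw /= count_cat !count_map; congr addn; apply: eq_count => w /=;
  by rewrite occ_cons /=.
Qed.

Lemma NwS_T0 m y p : Nw m true y 0 p = 0%N.
Proof. by rewrite /Nw; apply/eqP; rewrite -leqn0 leqNgt -has_count; apply/hasPn => w _ /=. Qed.

Lemma NwS_T m y a p : Nw m.+1 true y a.+1 p =
  (Nw m true y a p + (if p is p'.+1 then Nw m false y a p' else 0))%N.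
Proof.
rewrite /Nw /= count_cat !count_map; congr addn; first by apply: eq_count => w /=; rewrite occ_cons.
case: p => [|p].
  apply/eqP; rewrite -leqn0 leqNgt -has_count; apply/hasPn => w _ /=.
  by rewrite occ_cons /= add1n !andbF.
by apply: eq_in_count => w _ /=; rewrite occ_cons /= add1n eqSS add1n eqSS.
Qed.

Lemma cmp0 a : cmp a 0 = (a == 0 : nat).
Proof. by []. Qed.

Lemma cmp_00 a b m : (a + b = m.+1)%N -> (cmp a 0 * cmp b 0 = 0)%N.
Proof. by rewrite !cmp0; case: a => [|a]; case: b. Qed.

Lemma cmpS0 a : cmp a.+1 0 = 0%N.
Proof. by []. Qed.

Lemma cmp0S p : cmp 0 p.+1 = 0%N.
Proof. by []. Qed.

Arguments cmp : simpl never.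

Lemma Nw_form m : forall x y a b p, (a + b = m.+1)%N -> Nw m x y a p = wform x y a b p.
Proof.
elim: m => [|m IH] x y a b p hab.
  rewrite /Nw /= addn0.
  have [[-> ->]|[-> ->]] : (a = 1 /\ b = 0 \/ a = 0 /\ b = 1)%N by lia.
    by case: x; case: y; case: p => [|[|p]] //=; rewrite /cmp ?bin0n.
  by case: x; case: y; case: p => [|[|p]] //=; rewrite /cmp ?bin0n.
case: x.
  case: a hab => [|a] hab.
    rewrite NwS_T0; case: y; case: p => [|p] //=; rewrite /wform ?cmp0S //.
    by rewrite cmp0; case: b hab.
  rewrite NwS_T (IH true y a b p); last lia.
  have z := @cmp_00 a b m ltac:(lia).
  case: p => [|p].
    case: y; rewrite /wform ?cmpS ?cmpS0 ?addn0 ?mul0n //.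
    by rewrite mulnDl z addn0.
  rewrite (IH false y a b p); last lia.
  by case: y; rewrite /wform ?cmpS; ring.
case: b hab => [|b] hab.
  rewrite NwS_F !Nw_big; try lia.
  by case: y; rewrite /wform cmp0S ?muln0.
rewrite NwS_F (IH true y a b p) ?(IH false y a b p); try lia.
by case: y; rewrite /wform cmpS; ring.
Qed.

Lemma inP_cons r n x w : size w = (r.+1 * n)%N ->
  in_P r n (x :: w) = (count id (x :: w) == (r * n).+1).
Proof.
move=> sw; rewrite /in_P /= sw eqxx /=.
have h := count_predC id (x :: w).
rewrite (eq_count (a1 := predC id) (a2 := negb)) // in h.
case: eqP => //= hc; apply/eqP; move: h; rewrite /= sw hc; lia.
Qed.

Lemma W_first r n x (Z : pred (seq bool)) :
  count (fun s => [&& in_P r n s, first_step s == x & Z s]) (W (r.+1 * n).+1) =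
  count (fun w => (count id (x :: w) == (r * n).+1) && Z (x :: w)) (W (r.+1 * n)).
Proof.
rewrite /= count_cat !count_map.
have E x' : count (preim (cons x') (fun s => [&& in_P r n s, first_step s == x & Z s]))
     (W (r.+1 * n)) = if x' == x then
  count (fun w => (count id (x :: w) == (r * n).+1) && Z (x :: w)) (W (r.+1 * n)) else 0%N.
  case: eqP => [->|ne].
    by apply: eq_in_count => w; rewrite W_mem => /eqP sw /=; rewrite inP_cons // eqxx.
  apply/eqP; rewrite -leqn0 leqNgt -has_count; apply/hasPn => w _ /=.
  by rewrite /first_step /=; case: eqP => //; rewrite andbF.
by rewrite !E; case: (x); rewrite ?addn0.
Qed.

Lemma last_step_cons x w : last_step (x :: w) = last x w.
Proof. by rewrite /last_step /= -[size w]/((size (x :: w)).-1) nth_last. Qed.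

Lemma base_count r n x y p :
  #|[set s : ((r.+1 * n).+1).-tuple bool |
     [&& in_P r n s, first_step s == x & (last_step s == y) && (peaks s == p)]]|
  = wform x y (r * n).+1 n p.
Proof.
rewrite (card_W _ (fun s => [&& in_P r n s, first_step s == x & (last_step s == y) && (peaks s == p)])).
rewrite W_first -(Nw_form (m := (r.+1 * n)%N)); last by rewrite mulSn; lia.
by apply: eq_count => w /=; rewrite last_step_cons.
Qed.


Definition eab (a b : bool) := fun x y : bool => (x == a) && (y == b).
Definition eU (a : bool) := fun _ y : bool => y == a.

Lemma Ev_eab0 a b s : Ev (eab a b) s 0 = (last_step s == a) && (first_step s == b).
Proof.
rewrite /Ev /eab /cn /last_step /first_step add0n.
case: (posnP (size s)) => [->|sp]; first by rewrite !modn0.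
by rewrite mod0n modn_small // prednK.
Qed.

Lemma Ev_eU0 a s : Ev (eU a) s 0 = (first_step s == a).
Proof.
rewrite /Ev /eU /cn /first_step.
case: (posnP (size s)) => [->|sp]; first by rewrite !modn0.
by rewrite mod0n.
Qed.

Lemma Ev_eab_succ a b s i : (i.+1 < size s)%N ->
  Ev (eab a b) s i.+1 = (nth false s i == a) && (nth false s i.+1 == b).
Proof.
move=> h; rewrite /Ev /eab (cn_small h).
have -> : ((i.+1 + size s).-1 = i + size s)%N by lia.
rewrite cn_per cn_small //; lia.
Qed.

Lemma occ_cyc a b s : (0 < size s)%N ->
  (occ a b s + Ev (eab a b) s 0 = cyc (eab a b) s)%N.
Proof.
move=> sp; rewrite /cyc /occ.
have -> : size s = (size s).-1.+1 by rewrite prednK.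
rewrite /= iota1 count_map addnC; congr addn.
apply: eq_in_count => i; rewrite mem_iota add0n => /andP [_ hi] /=.
by rewrite Ev_eab_succ //; lia.
Qed.

Lemma occ_low_cnt r a b t : (0 < size t)%N ->
  occ_low r a b t = count (fun v => Ev (eab a b) t v && (Hc r t v <= 0)%R) (iota 1 (size t).-1).
Proof.
move=> sp; rewrite /occ_low iota1 count_map; apply: eq_in_count => i.
rewrite mem_iota add0n => /andP [_ hi] /=.
by rewrite Ev_eab_succ ?ht_Hc ?andbA //; lia.
Qed.

Lemma steps_low_cnt r a t :
  steps_low r a t = count (fun v => Ev (eU a) t v && (Hc r t v <= 0)%R) (iota 0 (size t)).
Proof.
rewrite /steps_low; apply: eq_in_count => i.
rewrite mem_iota add0n => /andP [_ hi] /=.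
by rewrite /Ev /eU cn_small // ht_Hc //; apply: ltnW.
Qed.

Lemma inP_rot r n q s : in_P r n (rot q s) = in_P r n s.
Proof.
have P : perm_eq (rot q s) s by rewrite perm_rot.
by rewrite /in_P size_rot !(permP P).
Qed.

Lemma st_occ_low r n a b s q : in_P r n s -> (q < size s)%N ->
  occ_low r a b (rot q s) = Rk r (eab a b) s q.
Proof.
move=> hP hq; rewrite occ_low_cnt ?size_rot; last by lia.
by rewrite stat_rot // (Hc_P hP).
Qed.

Lemma st_steps_low r n a s q : in_P r n s -> (q < size s)%N -> Ev (eU a) s q ->
  steps_low r a (rot q s) = (Rk r (eU a) s q + 1)%N.
Proof.
move=> hP hq he; rewrite steps_low_cnt size_rot.
have -> : size s = (size s).-1.+1 by lia.
rewrite /= -stat_rot ?(Hc_P hP) // addnC; congr addn.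
by rewrite Ev_rot ?addn0 ?he /Hc ?big_ord0 //; apply: ltnW.
Qed.

Lemma cyc_eU a s : cyc (eU a) s = count (fun x => x == a) s.
Proof.
rewrite /cyc /eU /Ev.
rewrite -{3}(mkseq_nth false s) /mkseq count_map.
apply: eq_in_count => i; rewrite mem_iota add0n => /andP [_ hi] /=.
by rewrite cn_small.
Qed.


Lemma main_count r n e e' kk (st : seq bool -> nat) c K j :
  (forall s : seq bool, in_P r n s -> cyc e' s == kk -> cyc e s = K) ->
  (forall s q, in_P r n s -> (q < size s)%N -> Ev e s q -> st (rot q s) = (Rk r e s q + c)%N) ->
  (c <= j < K + c)%N ->
  (K * #|[set s : ((r.+1 * n).+1).-tuple bool | [&& in_P r n s, Ev e s 0, cyc e' s == kk & st s == j]]|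
   = #|[set s : ((r.+1 * n).+1).-tuple bool | [&& in_P r n s, Ev e s 0 & cyc e' s == kk]]|)%N.
Proof.
move=> hK hst hj.
apply: (@double_count r (r.+1 * n)%N e (in_P r n) (fun s => cyc e' s == kk) st c K j).
- by move=> s sz hP; have := Hc_P hP; rewrite sz.
- by move=> s q sz hq; rewrite inP_rot.
- by move=> s q sz hq; rewrite cyc_rot // sz; apply: leqW.
- by move=> s sz hP hG; apply: hK.
- by move=> s q sz hP hq he; apply: hst; rewrite // sz.
- exact: hj.
Qed.

Local Open Scope ring_scope.
Lemma rat_div (K x y : nat) : (0 < K)%N -> (K * x = y)%N -> (x%:R : rat) = K%:R^-1 * y%:R.
Proof.
move=> hK <-; rewrite natrM mulrA mulVf ?mul1r //.
by rewrite pnatr_eq0 -lt0n.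
Qed.

Lemma size_t (N : nat) (s : N.-tuple bool) : size s = N.
Proof. exact: size_tuple. Qed.

Lemma cmpSS a p : cmp a.+1 p.+1 = 'C(a, p).
Proof. by []. Qed.

Lemma part1 r n k : (1 <= r)%N -> (1 <= n)%N -> (1 <= k)%N ->
  (forall j : nat, (j <= k - 1)%N ->
     ((npaths r n (fun s => [&& peaks s == (k - 1)%N, first_step s == false,
                               last_step s == true & occ_low r true false s == j]))%:R : rat)
     = k%:R^-1 * 'C(r * n, k - 1)%:R * 'C(n - 1, k - 1)%:R).
Proof.
move=> hr hn hk j hj.
set e := eab true false.
have M := @main_count r n e e k (occ_low r true false) 0 k j.
rewrite addn0 in M.
have {}M := M (fun s _ h => eqP h) (fun s q hP hq _ => etrans (st_occ_low true false hP hq) (esym (addn0 _))) ltac:(lia).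
have E1 : npaths r n (fun s => [&& peaks s == (k - 1)%N, first_step s == false,
                               last_step s == true & occ_low r true false s == j]) =
   #|[set s : ((r.+1 * n).+1).-tuple bool | [&& in_P r n s, Ev e s 0, cyc e s == k & occ_low r true false s == j]]|.
  rewrite /npaths; apply: eq_card => s; rewrite !inE.
  rewrite -(occ_cyc true false (s := s)) ?size_t // /e Ev_eab0 /peaks.
  case: (first_step s == false); case: (last_step s == true); rewrite /= ?andbF //.
  by have -> : (occ true false s + 1 == k)%N = (occ true false s == k - 1)%N by apply/eqP/eqP; lia.
have E2 : #|[set s : ((r.+1 * n).+1).-tuple bool | [&& in_P r n s, Ev e s 0 & cyc e s == k]]|
   = wform false true (r * n).+1 n (k - 1).
  rewrite -base_count; apply: eq_card => s; rewrite !inE.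
  rewrite -(occ_cyc true false (s := s)) ?size_t // /e Ev_eab0 /peaks.
  case: (first_step s == false); case: (last_step s == true); rewrite /= ?andbF //.
  by have -> : (occ true false s + 1 == k)%N = (occ true false s == k - 1)%N by apply/eqP/eqP; lia.
rewrite E1 (rat_div _ M) //.
rewrite E2 /wform.
have -> : (k - 1).+1 = k by lia.
case: k hk {M E1 E2 hj} => // k _; case: n hn => // n _.
by rewrite !cmpSS subn1 /= subn1 /= natrM mulrA.
Qed.

Lemma first_cons x w : first_step (x :: w) = x.
Proof. by []. Qed.

Lemma idP1 s : (0 < size s)%N ->
  (occ true false s + last_step s = occ false true s + first_step s)%N.
Proof. by case: s => [|x w] // _; rewrite last_step_cons first_cons occ_id1. Qed.

Lemma idP2 s : (0 < size s)%N ->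
  (occ true true s + occ true false s + last_step s = count id s)%N.
Proof. by case: s => [|x w] // _; rewrite last_step_cons occ_id2. Qed.

Lemma idP3 s : (0 < size s)%N ->
  (occ false false s + occ false true s + ~~ last_step s = count negb s)%N.
Proof. by case: s => [|x w] // _; rewrite last_step_cons occ_id3. Qed.

Lemma card_split (T : finType) (A b : pred T) :
  #|[set x | A x]| = (#|[set x | A x && b x]| + #|[set x | A x && ~~ b x]|)%N.
Proof.
rewrite !card_sumP -big_split /=; apply: eq_bigr => x _.
by case: (A x); case: (b x).
Qed.

Lemma inP_counts r n s : in_P r n s ->
  [/\ size s = (r.+1 * n).+1, count id s = (r * n).+1 & count negb s = n].
Proof. by case/and3P => /eqP -> /eqP -> /eqP ->. Qed.

Lemma part2 r n k : (1 <= r)%N -> (1 <= n)%N -> (1 <= k)%N ->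
  (forall j : nat, (j <= k - 1)%N ->
     ((npaths r n (fun s => [&& valleys s == (k - 1)%N, first_step s == true,
                               last_step s == false & occ_low r false true s == j]))%:R : rat)
     = k%:R^-1 * 'C(r * n, k - 1)%:R * 'C(n - 1, k - 1)%:R).
Proof.
move=> hr hn hk j hj.
set e := eab false true.
have M := @main_count r n e e k (occ_low r false true) 0 k j.
rewrite addn0 in M.
have {}M := M (fun s _ h => eqP h) (fun s q hP hq _ => etrans (st_occ_low false true hP hq) (esym (addn0 _))) ltac:(lia).
have E1 : npaths r n (fun s => [&& valleys s == (k - 1)%N, first_step s == true,
                               last_step s == false & occ_low r false true s == j]) =
   #|[set s : ((r.+1 * n).+1).-tuple bool | [&& in_P r n s, Ev e s 0, cyc e s == k & occ_low r false true s == j]]|.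
  rewrite /npaths; apply: eq_card => s; rewrite !inE.
  rewrite -(occ_cyc false true (s := s)) ?size_t // /e Ev_eab0 /valleys.
  case: (first_step s == true); case: (last_step s == false); rewrite /= ?andbF //.
  by have -> : (occ false true s + 1 == k)%N = (occ false true s == k - 1)%N by apply/eqP/eqP; lia.
have E2 : #|[set s : ((r.+1 * n).+1).-tuple bool | [&& in_P r n s, Ev e s 0 & cyc e s == k]]|
   = wform true false (r * n).+1 n k.
  rewrite -base_count; apply: eq_card => s; rewrite !inE.
  have sz : (0 < size s)%N by rewrite size_t.
  rewrite -(occ_cyc false true (s := s)) // /e Ev_eab0 /peaks.
  move: (idP1 sz); case: (first_step s); case: (last_step s) => /= I1; rewrite ?andbF //.
  by case: (in_P r n s) => //=; apply/eqP/eqP; lia.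
rewrite E1 (rat_div _ M) //.
rewrite E2 /wform.
case: k hk {M E1 E2 hj} => // k _; case: n hn => // n _.
by rewrite !cmpSS subn1 /= subn1 /= natrM mulrA.
Qed.

Lemma part3 r n k : (1 <= r)%N -> (1 <= n)%N -> (1 <= k)%N ->
  (forall j : nat, (j + k <= r * n)%N ->
     ((npaths r n (fun s => [&& drises s == (r * n - k)%N, first_step s == true,
                               last_step s == true & occ_low r true true s == j]))%:R : rat)
     = ((r * n - k).+1)%:R^-1 * 'C(r * n, k)%:R * 'C(n - 1, k - 1)%:R).
Proof.
move=> hr hn hk j hj.
set e := eab true true.
set K := (r * n - k).+1.
have M := @main_count r n e e K (occ_low r true true) 0 K j.
rewrite addn0 in M.
have {}M := M (fun s _ h => eqP h) (fun s q hP hq _ => etrans (st_occ_low true true hP hq) (esym (addn0 _))) ltac:(rewrite /K; lia).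
have E1 : npaths r n (fun s => [&& drises s == (r * n - k)%N, first_step s == true,
                               last_step s == true & occ_low r true true s == j]) =
   #|[set s : ((r.+1 * n).+1).-tuple bool | [&& in_P r n s, Ev e s 0, cyc e s == K & occ_low r true true s == j]]|.
  rewrite /npaths; apply: eq_card => s; rewrite !inE.
  rewrite -(occ_cyc true true (s := s)) ?size_t // /e Ev_eab0 /drises.
  case: (first_step s == true); case: (last_step s == true); rewrite /= ?andbF //.
  by rewrite addn1 eqSS.
have E2 : #|[set s : ((r.+1 * n).+1).-tuple bool | [&& in_P r n s, Ev e s 0 & cyc e s == K]]|
   = wform true true (r * n).+1 n k.
  rewrite -base_count; apply: eq_card => s; rewrite !inE.
  have sz : (0 < size s)%N by rewrite size_t.
  rewrite -(occ_cyc true true (s := s)) // /e Ev_eab0 /peaks.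
  move: (idP2 sz); case: (first_step s); case: (last_step s) => /= I2; rewrite ?andbF //.
  case hP: (in_P r n s) => //=.
  have [_ c1 _] := inP_counts hP.
  rewrite c1 in I2; rewrite /K; apply/eqP/eqP; lia.
rewrite E1 (rat_div _ M) //.
rewrite E2 /wform -mulrA; congr (_ * _).
clear M E1 E2 hj K.
case: k hk => // k _; case: n hn => // n _. rewrite subSS subn0.
by rewrite !cmpSS subn1 /= natrM.
Qed.

Lemma part4 r n k : (1 <= r)%N -> (1 <= n)%N -> (1 <= k)%N ->
  (forall j : nat, (j + k + 1 <= n)%N ->
     ((npaths r n (fun s => [&& dfalls s == (n - k - 1)%N, first_step s == false,
                               last_step s == false & occ_low r false false s == j]))%:R : rat)
     = (n - k)%:R^-1 * 'C(r * n, k - 1)%:R * 'C(n - 1, k)%:R).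
Proof.
move=> hr hn hk j hj.
set e := eab false false.
set K := (n - k)%N.
have M := @main_count r n e e K (occ_low r false false) 0 K j.
rewrite addn0 in M.
have {}M := M (fun s _ h => eqP h) (fun s q hP hq _ => etrans (st_occ_low false false hP hq) (esym (addn0 _))) ltac:(rewrite /K; lia).
have E1 : npaths r n (fun s => [&& dfalls s == (n - k - 1)%N, first_step s == false,
                               last_step s == false & occ_low r false false s == j]) =
   #|[set s : ((r.+1 * n).+1).-tuple bool | [&& in_P r n s, Ev e s 0, cyc e s == K & occ_low r false false s == j]]|.
  rewrite /npaths; apply: eq_card => s; rewrite !inE.
  rewrite -(occ_cyc false false (s := s)) ?size_t // /e Ev_eab0 /dfalls.
  case: (first_step s == false); case: (last_step s == false); rewrite /= ?andbF //.
  by have -> : (occ false false s + 1 == K)%N = (occ false false s == n - k - 1)%N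
    by rewrite /K; apply/eqP/eqP; lia.
have E2 : #|[set s : ((r.+1 * n).+1).-tuple bool | [&& in_P r n s, Ev e s 0 & cyc e s == K]]|
   = wform false false (r * n).+1 n k.
  rewrite -base_count; apply: eq_card => s; rewrite !inE.
  have sz : (0 < size s)%N by rewrite size_t.
  rewrite -(occ_cyc false false (s := s)) // /e Ev_eab0 /peaks.
  move: (idP1 sz) (idP3 sz); case: (first_step s); case: (last_step s) => /= I1 I3; rewrite ?andbF //.
  case hP: (in_P r n s) => //=.
  have [_ _ c1] := inP_counts hP.
  rewrite c1 in I3; rewrite /K; apply/eqP/eqP; lia.
rewrite E1 (rat_div _ M) //; last by rewrite /K; lia.
rewrite E2 /wform -mulrA; congr (_ * _).
clear M E1 E2 hj K.
case: k hk => // k _; case: n hn => // n _.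
by rewrite !cmpSS subn1 /= subn1 /= natrM.
Qed.

Lemma part5 r n k : (1 <= r)%N -> (1 <= n)%N -> (1 <= k)%N ->
  (forall j : nat, (1 <= j <= (r * n).+1)%N ->
     ((npaths r n (fun s => [&& peaks s == k, first_step s == true
                               & steps_low r true s == j]))%:R : rat)
     = ((r * n).+1)%:R^-1 * 'C((r * n).+1, k)%:R * 'C(n - 1, k - 1)%:R).
Proof.
move=> hr hn hk j hj.
set e := eU true.
set e' := eab true false.
set K := (r * n).+1.
have hK : forall s : seq bool, in_P r n s -> cyc e' s == k -> cyc e s = K.
  move=> s hP _; have [_ c1 _] := inP_counts hP.
  by rewrite /e /K cyc_eU -c1; apply: eq_count => x; case: x.
have M := @main_count r n e e' k (steps_low r true) 1 K j hK
   (fun s q hP hq he => st_steps_low hP hq he) ltac:(rewrite /K; lia).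
have E1 : npaths r n (fun s => [&& peaks s == k, first_step s == true
                               & steps_low r true s == j]) =
   #|[set s : ((r.+1 * n).+1).-tuple bool | [&& in_P r n s, Ev e s 0, cyc e' s == k & steps_low r true s == j]]|.
  rewrite /npaths; apply: eq_card => s; rewrite !inE.
  rewrite -(occ_cyc true false (s := s)) ?size_t // /e /e' Ev_eU0 Ev_eab0 /peaks.
  by case: (first_step s); rewrite /= ?andbF ?addn0.
have E2 : #|[set s : ((r.+1 * n).+1).-tuple bool | [&& in_P r n s, Ev e s 0 & cyc e' s == k]]|
   = (wform true true (r * n).+1 n k + wform true false (r * n).+1 n k)%N.
  rewrite (card_split _ (fun s : ((r.+1 * n).+1).-tuple bool => last_step s == true)).
  rewrite -!base_count; congr addn; apply: eq_card => s; rewrite !inE;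
  rewrite -(occ_cyc true false (s := s)) ?size_t // /e /e' Ev_eU0 Ev_eab0 /peaks;
  by case: (first_step s); case: (last_step s); rewrite /= ?andbF ?addn0 ?andbT.
rewrite E1 (rat_div _ M) //.
rewrite E2 /wform -mulrA; congr (_ * _).
rewrite /K; clear M E1 E2 hj K hK.
case: k hk => // k _; case: n hn => // n _.
rewrite !cmpSS !subn1 /= binS !natrD !natrM; ring.
Qed.

Lemma part6 r n k : (1 <= r)%N -> (1 <= n)%N -> (1 <= k)%N ->
  (forall j : nat, (1 <= j <= n)%N ->
     ((npaths r n (fun s => [&& valleys s == k, first_step s == false
                               & steps_low r false s == j]))%:R : rat)
     = n%:R^-1 * 'C(r * n, k - 1)%:R * 'C(n, k)%:R).
Proof.
move=> hr hn hk j hj.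
set e := eU false.
set e' := eab false true.
have hK : forall s : seq bool, in_P r n s -> cyc e' s == k -> cyc e s = n.
  move=> s hP _; have [_ _ c1] := inP_counts hP.
  by rewrite /e cyc_eU -c1; apply: eq_count => x; case: x.
have M := @main_count r n e e' k (steps_low r false) 1 n j hK
   (fun s q hP hq he => st_steps_low hP hq he) ltac:(lia).
have E1 : npaths r n (fun s => [&& valleys s == k, first_step s == false
                               & steps_low r false s == j]) =
   #|[set s : ((r.+1 * n).+1).-tuple bool | [&& in_P r n s, Ev e s 0, cyc e' s == k & steps_low r false s == j]]|.
  rewrite /npaths; apply: eq_card => s; rewrite !inE.
  rewrite -(occ_cyc false true (s := s)) ?size_t // /e /e' Ev_eU0 Ev_eab0 /valleys.
  by case: (first_step s); rewrite /= ?andbF ?addn0.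
have E2 : #|[set s : ((r.+1 * n).+1).-tuple bool | [&& in_P r n s, Ev e s 0 & cyc e' s == k]]|
   = (wform false true (r * n).+1 n (k - 1) + wform false false (r * n).+1 n k)%N.
  rewrite (card_split _ (fun s : ((r.+1 * n).+1).-tuple bool => last_step s == true)).
  rewrite -!base_count; congr addn; apply: eq_card => s; rewrite !inE;
  have sz : (0 < size s)%N by rewrite size_t.
  - rewrite -(occ_cyc false true (s := s)) // /e /e' Ev_eU0 Ev_eab0 /peaks.
    move: (idP1 sz); case: (first_step s); case: (last_step s) => /= I1; rewrite ?andbF ?addn0 ?andbT //.
    case: (in_P r n s) => //=; apply/eqP/eqP; lia.
  - rewrite -(occ_cyc false true (s := s)) // /e /e' Ev_eU0 Ev_eab0 /peaks.
    move: (idP1 sz); case: (first_step s); case: (last_step s) => /= I1; rewrite ?andbF ?addn0 ?andbT //.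
    case: (in_P r n s) => //=; apply/eqP/eqP; lia.
rewrite E1 (rat_div _ M) //.
rewrite E2 /wform -mulrA; congr (_ * _).
clear M E1 E2 hj hK.
have -> : (k - 1).+1 = k by lia.
case: k hk => // k _; case: n hn => // n _.
rewrite !cmpSS !subn1 /= binS !natrD !natrM; ring.
Qed.

Unset Implicit Arguments.
Local Open Scope ring_scope.

Theorem theorem15 (r n k : nat) :
  (1 <= r)%N -> (1 <= n)%N -> (1 <= k)%N ->
  (* (1) *)
  (forall j : nat, (j <= k - 1)%N ->
     ((npaths r n (fun s => [&& peaks s == (k - 1)%N, first_step s == false,
                               last_step s == true & occ_low r true false s == j]))%:R : rat)
     = k%:R^-1 * 'C(r * n, k - 1)%:R * 'C(n - 1, k - 1)%:R) /\
  (* (2) *)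
  (forall j : nat, (j <= k - 1)%N ->
     ((npaths r n (fun s => [&& valleys s == (k - 1)%N, first_step s == true,
                               last_step s == false & occ_low r false true s == j]))%:R : rat)
     = k%:R^-1 * 'C(r * n, k - 1)%:R * 'C(n - 1, k - 1)%:R) /\
  (* (3) j = 0, ..., rn - k *)
  (forall j : nat, (j + k <= r * n)%N ->
     ((npaths r n (fun s => [&& drises s == (r * n - k)%N, first_step s == true,
                               last_step s == true & occ_low r true true s == j]))%:R : rat)
     = ((r * n - k).+1)%:R^-1 * 'C(r * n, k)%:R * 'C(n - 1, k - 1)%:R) /\
  (* (4) j = 0, ..., n - k - 1 *)
  (forall j : nat, (j + k + 1 <= n)%N ->
     ((npaths r n (fun s => [&& dfalls s == (n - k - 1)%N, first_step s == false,
                               last_step s == false & occ_low r false false s == j]))%:R : rat)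
     = (n - k)%:R^-1 * 'C(r * n, k - 1)%:R * 'C(n - 1, k)%:R) /\
  (* (5) j = 1, ..., rn + 1 *)
  (forall j : nat, (1 <= j <= (r * n).+1)%N ->
     ((npaths r n (fun s => [&& peaks s == k, first_step s == true
                               & steps_low r true s == j]))%:R : rat)
     = ((r * n).+1)%:R^-1 * 'C((r * n).+1, k)%:R * 'C(n - 1, k - 1)%:R) /\
  (* (6) j = 1, ..., n *)
  (forall j : nat, (1 <= j <= n)%N ->
     ((npaths r n (fun s => [&& valleys s == k, first_step s == false
                               & steps_low r false s == j]))%:R : rat)
     = n%:R^-1 * 'C(r * n, k - 1)%:R * 'C(n, k)%:R).
Proof.
move=> hr hn hk.
split; first exact: part1.
split; first exact: part2.
split; first exact: part3.
split; first exact: part4.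
split; first exact: part5.
exact: part6.
Qed.
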